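(* There exists a universal constant $c>0$ such that the following holds. Let $G=(V,E)$ be an infinite, connected, locally finite graph (multiple edges allowed, no self-loops), let $v\in V$ have degree $d_v$, and let $(X_t)$ be simple random walk on $G$ started at $X_0=v$. Then for every integer $t\geq 1$, $$\mathbb{P}_v(\tau_v \geq t) \geq \frac{c}{d_v\sqrt{t}}.$$
   Context: For a vertex $u$, the hitting time is $\tau_u=\min\{t\geq 1: X_t=u\}$; when $X_0=v$, $\tau_v$ is the return time to $v$. $\mathbb{P}_v$ denotes the law of simple random walk started at $v$. Simple random walk moves at each step to a uniformly chosen edge incident to the current vertex. *)

(* Defs.v *)
From Stdlib Require Import Reals List Relations Classical ClassicalDescription.
Import ListNotations.
Open Scope R_scope.

(* A locally finite multigraph on a vertex type V is given by
   - mult x y : number of edges between x and y,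
   - nbrs x   : a duplicate-free finite list of the neighbours of x
                (exactly the y with mult x y > 0). *)

Definition lf_multigraph (V : Type) (mult : V -> V -> nat) (nbrs : V -> list V) : Prop :=
  (forall x y, mult x y = mult y x) /\
  (forall x, mult x x = 0%nat) /\
  (forall x, NoDup (nbrs x)) /\
  (forall x y, In y (nbrs x) <-> (0 < mult x y)%nat).

Definition adj {V : Type} (mult : V -> V -> nat) : relation V :=
  fun x y => (0 < mult x y)%nat.

Definition connected_graph (V : Type) (mult : V -> V -> nat) : Prop :=
  forall x y : V, clos_refl_trans V (adj mult) x y.

Definition infinite_type (V : Type) : Prop :=
  ~ exists l : list V, forall x : V, In x l.

Definition deg {V : Type} (mult : V -> V -> nat) (nbrs : V -> list V) (x : V) : nat :=
  fold_right (fun y acc => (mult x y + acc)%nat) 0%nat (nbrs x).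

(* All possible trajectories (X_1, ..., X_n) of length n of the walk from x. *)
Fixpoint walks {V : Type} (nbrs : V -> list V) (x : V) (n : nat) : list (list V) :=
  match n with
  | O => [nil]
  | S n' => flat_map (fun u => map (cons u) (walks nbrs u n')) (nbrs x)
  end.

Fixpoint wprob {V : Type} (mult : V -> V -> nat) (nbrs : V -> list V)
         (x : V) (p : list V) : R :=
  match p with
  | nil => 1
  | u :: p' => (INR (mult x u) / INR (deg mult nbrs x)) * wprob mult nbrs u p'
  end.

Definition avoids {V : Type} (v : V) (p : list V) : bool :=
  if excluded_middle_informative (In v p) then false else true.

(* P_v(tau_v >= t) = P_v(X_1 <> v, ..., X_{t-1} <> v)
   = sum over trajectories (X_1..X_{t-1}) avoiding v of their probability. *)
Definition return_tail {V : Type} (mult : V -> V -> nat) (nbrs : V -> list V)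
           (v : V) (t : nat) : R :=
  fold_right Rplus 0
    (map (wprob mult nbrs v) (filter (avoids v) (walks nbrs v (t - 1)))).

(* Main.v *)
Require Import Defs.
From Stdlib Require Import Reals List.
From Stdlib Require Import Lra Lia Psatz Classical ClassicalDescription Relations FunctionalExtensionality.
Import ListNotations.
Open Scope R_scope.

Definition lsum {A : Type} (f : A -> R) (l : list A) : R :=
  fold_right (fun x acc => f x + acc) 0 l.

Lemma lsum_nil {A} (f : A -> R) : lsum f [] = 0. Proof. reflexivity. Qed.
Lemma lsum_cons {A} (f : A -> R) x l : lsum f (x :: l) = f x + lsum f l.
Proof. reflexivity. Qed.
Lemma lsum_app {A} (f : A -> R) l1 l2 : lsum f (l1 ++ l2) = lsum f l1 + lsum f l2.
Proof. induction l1; simpl; [lra| unfold lsum in *; simpl; rewrite IHl1; lra]. Qed.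
Lemma lsum_plus {A} (f g : A -> R) l : lsum (fun x => f x + g x) l = lsum f l + lsum g l.
Proof. induction l; unfold lsum in *; simpl; [lra| rewrite IHl; lra]. Qed.
Lemma lsum_scal {A} (c : R) (f : A -> R) l : lsum (fun x => c * f x) l = c * lsum f l.
Proof. induction l; unfold lsum in *; simpl; [lra| rewrite IHl; lra]. Qed.
Lemma lsum_minus {A} (f g : A -> R) l : lsum (fun x => f x - g x) l = lsum f l - lsum g l.
Proof. induction l; unfold lsum in *; simpl; [lra| rewrite IHl; lra]. Qed.
Lemma lsum_ext {A} (f g : A -> R) l : (forall x, In x l -> f x = g x) -> lsum f l = lsum g l.
Proof. induction l; intro H; unfold lsum in *; simpl; [lra|].
  rewrite H by (left; auto). rewrite IHl; [lra| intros; apply H; right; auto]. Qed.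
Lemma lsum_le {A} (f g : A -> R) l : (forall x, In x l -> f x <= g x) -> lsum f l <= lsum g l.
Proof. induction l; intro H; unfold lsum in *; simpl; [lra|].
  assert (f a <= g a) by (apply H; left; auto).
  assert (fold_right (fun x acc => f x + acc) 0 l <= fold_right (fun x acc => g x + acc) 0 l)
    by (apply IHl; intros; apply H; right; auto). lra. Qed.
Lemma lsum_nonneg {A} (f : A -> R) l : (forall x, In x l -> 0 <= f x) -> 0 <= lsum f l.
Proof. intro H. assert (lsum (fun _ => 0) l = 0).
  { induction l; unfold lsum in *; simpl; auto; rewrite IHl; [lra|intros; apply H; right; auto]. }
  rewrite <- H0. apply lsum_le; auto. Qed.
Lemma lsum_zero {A} (f : A -> R) l : (forall x, In x l -> f x = 0) -> lsum f l = 0.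
Proof. intro H. induction l; unfold lsum in *; simpl; auto.
  rewrite H by (left;auto). rewrite IHl; [lra| intros; apply H; right; auto]. Qed.
Lemma lsum_nonzero {A} (f : A -> R) l : lsum f l <> 0 -> exists x, In x l /\ f x <> 0.
Proof. intro H. destruct (classic (exists x, In x l /\ f x <> 0)) as [E|E]; auto.
  exfalso; apply H; apply lsum_zero. intros x Hx. apply NNPP. intro; apply E; eauto. Qed.
Lemma lsum_term_le {A} (f : A -> R) l x : (forall y, In y l -> 0 <= f y) -> In x l -> f x <= lsum f l.
Proof. induction l; intros H Hx; simpl in Hx; [contradiction|]. unfold lsum in *; simpl.
  destruct Hx as [<-|Hx].
  - assert (0 <= fold_right (fun x acc => f x + acc) 0 l) by (apply (lsum_nonneg f); intros; apply H; right; auto). lra.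
  - assert (0 <= f a) by (apply H; left; auto). specialize (IHl (fun y Hy => H y (or_intror Hy)) Hx). lra. Qed.

Lemma lsum_eq_support {A} (f : A -> R) (l1 l2 : list A) :
  NoDup l1 -> NoDup l2 ->
  (forall z, f z <> 0 -> In z l1 -> In z l2) ->
  (forall z, f z <> 0 -> In z l2 -> In z l1) ->
  lsum f l1 = lsum f l2.
Proof.
  revert l2. induction l1 as [|a l1 IH]; intros l2 N1 N2 H1 H2.
  - symmetry. apply lsum_zero. intros x Hx. apply NNPP; intro Hf. apply (H2 x Hf Hx).
  - inversion N1; subst. rewrite lsum_cons.
    destruct (classic (f a = 0)) as [Fa|Fa].
    + rewrite Fa. rewrite (IH l2); auto; [lra| |].
      * intros z Hz Hin. apply H1; auto. right; auto.
      * intros z Hz Hin. destruct (H2 z Hz Hin) as [<-|?]; [contradiction|auto].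
    + destruct (in_split a l2 (H1 a Fa (or_introl eq_refl))) as [la [lb ->]].
      rewrite lsum_app, lsum_cons. rewrite (IH (la ++ lb)); auto.
      * rewrite lsum_app; lra.
      * eapply NoDup_remove_1; eauto.
      * intros z Hz Hin. assert (In z (la ++ a :: lb)) by (apply H1; auto; right; auto).
        apply in_app_or in H. apply in_or_app. destruct H as [?|[<-|?]]; auto. contradiction.
      * intros z Hz Hin. assert (In z (a :: l1)).
        { apply H2; auto. apply in_app_or in Hin; apply in_or_app; destruct Hin; auto; right; right; auto. }
        destruct H as [<-|?]; auto. exfalso. apply (NoDup_remove_2 _ _ _ N2 Hin).
Qed.

Lemma lsum_sub_support {A} (f : A -> R) (l1 l2 : list A) :
  NoDup l1 -> NoDup l2 -> (forall z, 0 <= f z) ->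
  (forall z, f z <> 0 -> In z l1 -> In z l2) ->
  lsum f l1 <= lsum f l2.
Proof.
  revert l2. induction l1 as [|a l1 IH]; intros l2 N1 N2 Hp H1.
  - apply lsum_nonneg; auto.
  - inversion N1; subst. rewrite lsum_cons.
    destruct (classic (f a = 0)) as [Fa|Fa].
    + rewrite Fa. assert (lsum f l1 <= lsum f l2); [|lra]. apply IH; auto.
      intros z Hz Hin. apply H1; auto. right; auto.
    + destruct (in_split a l2 (H1 a Fa (or_introl eq_refl))) as [la [lb ->]].
      rewrite lsum_app, lsum_cons. assert (lsum f l1 <= lsum f (la ++ lb)); [|rewrite lsum_app in H; lra].
      apply IH; auto.
      * eapply NoDup_remove_1; eauto.
      * intros z Hz Hin. assert (In z (la ++ a :: lb)) by (apply H1; auto; right; auto).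
        apply in_app_or in H. apply in_or_app. destruct H as [?|[<-|?]]; auto. contradiction.
Qed.

Lemma lsum_swap {A B} (F : A -> B -> R) (l1 : list A) (l2 : list B) :
  lsum (fun x => lsum (fun y => F x y) l2) l1 = lsum (fun y => lsum (fun x => F x y) l1) l2.
Proof.
  induction l1 as [|a l1 IH].
  - rewrite lsum_nil. symmetry; apply lsum_zero; auto.
  - rewrite lsum_cons, IH. rewrite <- lsum_plus. apply lsum_ext; intros; rewrite lsum_cons; reflexivity.
Qed.

Lemma lsum_point {A} (f : A -> R) (l : list A) (v : A) :
  NoDup l -> In v l -> (forall z, f z <> 0 -> z = v) -> lsum f l = f v.
Proof.
  intros N Hv H. replace (f v) with (lsum f [v]) by (unfold lsum; simpl; lra).
  apply lsum_eq_support; [exact N| constructor; [intros []|constructor] | |].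
  - intros z Hz _. rewrite (H z Hz). left; auto.
  - intros z Hz _. rewrite (H z Hz). auto.
Qed.

Lemma lsum_sum_f {A} (F : nat -> A -> R) l n :
  lsum (fun x => sum_f_R0 (fun k => F k x) n) l = sum_f_R0 (fun k => lsum (F k) l) n.
Proof.
  induction n; simpl.
  - reflexivity.
  - rewrite lsum_plus, IHn. reflexivity.
Qed.

Section G.
Context {V : Type} (mult : V -> V -> nat) (nbrs : V -> list V).
Hypothesis Hsym : forall x y, mult x y = mult y x.
Hypothesis Hnd : forall x, NoDup (nbrs x).
Hypothesis Hnb : forall x y, In y (nbrs x) <-> (0 < mult x y)%nat.
Hypothesis Hdeg : forall x, (0 < deg mult nbrs x)%nat.
Context (v : V).

Definition eqd (x y : V) : {x = y} + {x <> y} := excluded_middle_informative (x = y).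
Definition dg x := INR (deg mult nbrs x).
Definition mm x y := INR (mult x y).

Lemma dg_lsum x : dg x = lsum (fun y => mm x y) (nbrs x).
Proof. unfold dg, deg, mm, lsum. induction (nbrs x); simpl; [reflexivity|].
  rewrite plus_INR, IHl. reflexivity. Qed.
Lemma nb_sym x y : In y (nbrs x) <-> In x (nbrs y).
Proof. rewrite !Hnb, Hsym. tauto. Qed.
Lemma dg_pos x : 0 < dg x.
Proof. unfold dg. apply lt_0_INR, Hdeg. Qed.
Lemma mm_nonneg x y : 0 <= mm x y.
Proof. apply pos_INR. Qed.
Lemma mm_ge1 x y : In y (nbrs x) -> 1 <= mm x y.
Proof. intro H. apply Hnb in H. unfold mm. apply (le_INR 1). lia. Qed.
Lemma mm_sym x y : mm x y = mm y x.
Proof. unfold mm; rewrite Hsym; reflexivity. Qed.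
Lemma mm_zero x y : ~ In y (nbrs x) -> mm x y = 0.
Proof. intro H. unfold mm. destruct (mult x y) eqn:E; [reflexivity|].
  exfalso; apply H; apply Hnb; lia. Qed.
Lemma trans_sum x : lsum (fun u => mm x u / dg x) (nbrs x) = 1.
Proof. unfold Rdiv. rewrite (lsum_ext _ (fun u => / dg x * mm x u)) by (intros; lra).
  rewrite lsum_scal, <- dg_lsum. field. apply Rgt_not_eq, dg_pos. Qed.

Fixpoint h (k : nat) (x : V) : R :=
  match k with
  | O => if eqd x v then 1 else 0
  | S k' => lsum (fun u => mm x u / dg x * h k' u) (nbrs x)
  end.

Fixpoint A (n : nat) (x : V) : R :=
  match n with
  | O => 1
  | S n' => lsum (fun u => if eqd u v then 0 else mm x u / dg x * A n' u) (nbrs x)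
  end.

Lemma wt_nonneg x u : 0 <= mm x u / dg x.
Proof. apply Rmult_le_pos; [apply mm_nonneg| left; apply Rinv_0_lt_compat, dg_pos]. Qed.

Lemma h_nonneg k x : 0 <= h k x.
Proof. revert x; induction k; intro x; simpl.
  - destruct (eqd x v); lra.
  - apply lsum_nonneg; intros. apply Rmult_le_pos; auto using wt_nonneg. Qed.

Lemma A_bounds n x : 0 <= A n x <= 1.
Proof. revert x; induction n; intro x; simpl; [lra|]. split.
  - apply lsum_nonneg; intros. destruct (eqd x0 v); [lra|]. apply Rmult_le_pos; [apply wt_nonneg| apply IHn].
  - rewrite <- (trans_sum x). apply lsum_le. intros u _. destruct (eqd u v).
    + apply wt_nonneg.
    + pose proof (wt_nonneg x u). pose proof (IHn u). nra. Qed.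

Lemma A_decr n x : A (S n) x <= A n x.
Proof. revert x; induction n; intro x.
  - pose proof (A_bounds 1 x). simpl A at 2. lra.
  - simpl A. apply lsum_le. intros u _. destruct (eqd u v); [lra|].
    pose proof (wt_nonneg x u). specialize (IHn u). simpl A in IHn. nra. Qed.

Lemma A_mono n k x : (k <= n)%nat -> A n x <= A k x.
Proof. induction 1; [lra|]. pose proof (A_decr m x). lra. Qed.

Lemma last_exit n : forall x,
  (if eqd x v then 0 else A n x) + sum_f_R0 (fun k => h k x * A (n - k) v) n = 1.
Proof.
  induction n; intro x.
  - simpl. destruct (eqd x v); simpl; lra.
  - rewrite decomp_sum by lia. simpl pred.
    replace (sum_f_R0 (fun i => h (S i) x * A (S n - S i) v) n)
      with (lsum (fun u => mm x u / dg x * sum_f_R0 (fun k => h k u * A (n - k) v) n) (nbrs x)).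
    2:{ rewrite (lsum_ext _ (fun u => sum_f_R0 (fun k => mm x u / dg x * (h k u * A (n - k) v)) n)).
        2:{ intros u _. rewrite scal_sum. apply sum_eq. intros; ring. }
        rewrite lsum_sum_f. apply sum_eq. intros i _. simpl h.
        replace (S n - S i)%nat with (n - i)%nat by lia.
        rewrite Rmult_comm, <- lsum_scal. apply lsum_ext. intros; ring. }
    rewrite (lsum_ext _ (fun u => mm x u / dg x - mm x u / dg x * (if eqd u v then 0 else A n u))).
    2:{ intros u _. specialize (IHn u).
        replace (sum_f_R0 (fun k => h k u * A (n - k) v) n) with (1 - (if eqd u v then 0 else A n u)) by lra.
        ring. }
    rewrite lsum_minus, trans_sum.
    replace (lsum (fun u => mm x u / dg x * (if eqd u v then 0 else A n u)) (nbrs x)) with (A (S n) x).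
    2:{ simpl. apply lsum_ext. intros u _. destruct (eqd u v); ring. }
    rewrite Nat.sub_0_r. simpl h. destruct (eqd x v); subst; ring.
Qed.

Lemma avoids_cons (u : V) p : avoids v (u :: p) = if eqd u v then false else avoids v p.
Proof. unfold avoids. destruct (excluded_middle_informative (In v (u :: p))) as [H|H];
  destruct (eqd u v) as [E|E]; destruct (excluded_middle_informative (In v p)) as [H'|H']; auto;
  exfalso; simpl in H; intuition congruence. Qed.

Lemma rsum_map_flat {B C} (f : C -> R) (g : B -> list C) l :
  fold_right Rplus 0 (map f (flat_map g l)) = lsum (fun u => fold_right Rplus 0 (map f (g u))) l.
Proof. induction l; [reflexivity|]. simpl flat_map. rewrite map_app, fold_right_app.
  rewrite lsum_cons, <- IHl. generalize (fold_right Rplus 0 (map f (flat_map g l))).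
  intro r. induction (map f (g a)); simpl; [lra| rewrite IHl0; lra]. Qed.

Lemma filter_flat {B C} (p : C -> bool) (g : B -> list C) l :
  filter p (flat_map g l) = flat_map (fun u => filter p (g u)) l.
Proof. induction l; simpl; auto. rewrite filter_app, IHl. reflexivity. Qed.

Lemma tail_A n : forall x,
  fold_right Rplus 0 (map (wprob mult nbrs x) (filter (avoids v) (walks nbrs x n))) = A n x.
Proof.
  induction n; intro x.
  - simpl. unfold avoids. destruct (excluded_middle_informative (In v [])) as [[]|]; simpl; lra.
  - simpl walks. rewrite filter_flat, rsum_map_flat. simpl A. apply lsum_ext. intros u _.
    assert (filter (avoids v) (map (cons u) (walks nbrs u n)) =
            if eqd u v then [] else map (cons u) (filter (avoids v) (walks nbrs u n))).
    { induction (walks nbrs u n); simpl; [destruct (eqd u v); auto|].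
      rewrite avoids_cons. destruct (eqd u v); simpl; auto. destruct (avoids v a); simpl; rewrite IHl; auto. }
    rewrite H. destruct (eqd u v); [reflexivity|]. rewrite <- (IHn u).
    rewrite map_map. simpl wprob. fold (dg x). fold (mm x u).
    generalize (filter (avoids v) (walks nbrs u n)). intro L.
    induction L as [|a L IH]; simpl; [ring| rewrite IH; ring].
Qed.

Fixpoint ball (k : nat) : list V :=
  match k with O => [v] | S k' => nodup eqd (ball k' ++ flat_map nbrs (ball k')) end.

Lemma ball_nodup k : NoDup (ball k).
Proof. destruct k; simpl. constructor; [intros []|constructor]. apply NoDup_nodup. Qed.
Lemma ball_S x k : In x (ball k) -> In x (ball (S k)).
Proof. intro H; simpl. apply nodup_In. apply in_or_app; auto. Qed.
Lemma ball_nb x y k : In x (ball k) -> In y (nbrs x) -> In y (ball (S k)).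
Proof. intros H1 H2; simpl. apply nodup_In. apply in_or_app; right. apply in_flat_map; eauto. Qed.
Lemma ball_mono x k j : (k <= j)%nat -> In x (ball k) -> In x (ball j).
Proof. induction 1; auto. intro; apply ball_S; auto. Qed.
Lemma v_ball k : In v (ball k).
Proof. apply (ball_mono v 0); [lia|left; auto]. Qed.

Lemma h_supp k x : h k x <> 0 -> In x (ball k).
Proof. revert x; induction k; intros x H; simpl in H.
  - destruct (eqd x v); [subst; left; auto| lra].
  - destruct (lsum_nonzero _ _ H) as [u [Hu Hf]].
    assert (h k u <> 0) by (intro E; apply Hf; rewrite E; ring).
    apply (ball_nb u); auto. apply nb_sym; auto. Qed.

Lemma h_step k x : dg x * h (S k) x = lsum (fun u => mm x u * h k u) (nbrs x).
Proof. simpl. rewrite <- lsum_scal. apply lsum_ext. intros. field. apply Rgt_not_eq, dg_pos. Qed.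

Section Green.
Variable beta : R.
Hypothesis Hb : 0 <= beta.
Variable N : nat.
Definition Gs x := sum_f_R0 (fun s => beta ^ s * h s x) N.

Lemma green_pt x : dg x * Gs x - beta * lsum (fun u => mm x u * Gs u) (nbrs x)
   = dg x * (h 0 x - beta ^ (S N) * h (S N) x).
Proof. unfold Gs. induction N as [|n IH]; cbn [sum_f_R0].
  - rewrite (lsum_ext _ (fun u => 1 * (mm x u * h 0 u))) by (intros; ring).
    rewrite lsum_scal, <- h_step. ring.
  - rewrite (lsum_ext _ (fun u => mm x u * sum_f_R0 (fun s => beta ^ s * h s u) n + beta ^ S n * (mm x u * h (S n) u))) by (intros; ring).
    rewrite lsum_plus, lsum_scal, <- h_step.
    replace (dg x * (sum_f_R0 (fun s => beta ^ s * h s x) n + beta ^ S n * h (S n) x) -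
      beta * (lsum (fun u => mm x u * sum_f_R0 (fun s => beta ^ s * h s u) n) (nbrs x) + beta ^ S n * (dg x * h (S (S n)) x)))
      with ((dg x * sum_f_R0 (fun s => beta ^ s * h s x) n -
      beta * lsum (fun u => mm x u * sum_f_R0 (fun s => beta ^ s * h s u) n) (nbrs x)) + dg x * beta ^ S n * h (S n) x
       - beta * beta ^ S n * dg x * h (S (S n)) x) by ring.
    rewrite IH. simpl pow. ring.
Qed.

Lemma Gs_nonneg x : 0 <= Gs x.
Proof. unfold Gs. apply cond_pos_sum. intro. apply Rmult_le_pos; [apply pow_le; auto| apply h_nonneg]. Qed.

Lemma Gs_supp x : Gs x <> 0 -> In x (ball N).
Proof. unfold Gs. intro H. destruct (classic (exists s, (s <= N)%nat /\ h s x <> 0)) as [[s [Hs Hh]]|E].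
  - apply (ball_mono x s); auto. apply h_supp; auto.
  - exfalso; apply H. rewrite (sum_eq _ (fun _ => 0)). 
    + clear. induction N; simpl; lra.
    + intros i Hi. destruct (classic (h i x = 0)) as [->|?]; [ring| exfalso; apply E; eauto]. Qed.

Definition U := ball (S N).
Definition Qs := lsum (fun x => dg x * Gs x ^ 2) U.
Definition Ms := lsum (fun x => lsum (fun u => mm x u * Gs x * Gs u) (nbrs x)) U.
Definition Es := lsum (fun x => lsum (fun u => mm x u * (Gs x - Gs u) ^ 2) (nbrs x)) U.

Lemma swap_sq : lsum (fun x => lsum (fun u => mm x u * Gs u ^ 2) (nbrs x)) U = Qs.
Proof.
  rewrite (lsum_ext _ (fun x => lsum (fun u => mm x u * Gs u ^ 2) U)).
  2:{ intros x _. apply lsum_eq_support; [apply Hnd| apply ball_nodup| |].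
      - intros u Hf _. unfold U. apply ball_S. apply Gs_supp. intro E; apply Hf; rewrite E; ring.
      - intros u Hf _. apply NNPP. intro Hn. apply Hf. rewrite mm_zero; auto; ring. }
  rewrite lsum_swap. unfold Qs. apply lsum_ext. intros u _.
  rewrite dg_lsum, Rmult_comm, <- lsum_scal.
  rewrite (lsum_ext (fun x => Gs u ^ 2 * mm u x) (fun x => mm x u * Gs u ^ 2)) by (intros; rewrite mm_sym; ring).
  apply lsum_eq_support; [apply ball_nodup| apply Hnd | |].
  - intros x Hf _. apply NNPP. intro Hn. apply Hf. rewrite mm_sym, mm_zero; auto; ring.
  - intros x Hf Hx. assert (Gs u <> 0) by (intro E; apply Hf; rewrite E; ring).
    unfold U. apply (ball_nb u); [apply Gs_supp; auto|auto].
Qed.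

Lemma Es_decomp : Es = 2 * Qs - 2 * Ms.
Proof.
  assert (E1 : Es = lsum (fun x => dg x * Gs x ^ 2) U - 2 * Ms
             + lsum (fun x => lsum (fun u => mm x u * Gs u ^ 2) (nbrs x)) U).
  { unfold Es, Ms. rewrite <- lsum_scal, <- lsum_minus, <- lsum_plus. apply lsum_ext. intros x _.
    rewrite dg_lsum, Rmult_comm, <- !lsum_scal, <- lsum_minus, <- lsum_plus. apply lsum_ext. intros; ring. }
  rewrite E1, swap_sq. unfold Qs. ring.
Qed.

Lemma green_bound : Qs - beta * Ms <= dg v * Gs v.
Proof.
  unfold Qs, Ms. rewrite <- lsum_scal, <- lsum_minus.
  rewrite (lsum_ext _ (fun x => Gs x * (dg x * (h 0 x - beta ^ (S N) * h (S N) x)))).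
  2:{ intros x _. rewrite <- green_pt.
      rewrite (lsum_ext (fun u => mm x u * Gs x * Gs u) (fun u => Gs x * (mm x u * Gs u))) by (intros; ring).
      rewrite lsum_scal. ring. }
  apply Rle_trans with (lsum (fun x => Gs x * (dg x * h 0 x)) U).
  - apply lsum_le. intros x _. pose proof (Gs_nonneg x). pose proof (dg_pos x).
    pose proof (h_nonneg (S N) x). pose proof (pow_le beta (S N) Hb).
    apply Rmult_le_compat_l; auto. apply Rmult_le_compat_l; [lra|].
    assert (0 <= beta ^ S N * h (S N) x) by (apply Rmult_le_pos; auto). lra.
  - rewrite (lsum_point _ _ v); [ |apply ball_nodup| apply v_ball| ].
    + simpl h. destruct (eqd v v); [lra| congruence].
    + intros z Hz. simpl h in Hz. destruct (eqd z v); auto. exfalso; apply Hz; ring.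
Qed.
End Green.

Fixpoint chain (l : list V) : Prop :=
  match l with x :: l' => match l' with y :: _ => In y (nbrs x) /\ chain l' | [] => True end | [] => True end.
Fixpoint S1 (g : V -> R) (l : list V) : R :=
  match l with x :: l' => match l' with y :: _ => mm x y * (g x - g y) ^ 2 + S1 g l' | [] => 0 end | [] => 0 end.
Fixpoint Ls (g : V -> R) (l : list V) : R :=
  match l with x :: l' => match l' with y :: _ => Rabs (g x - g y) + Ls g l' | [] => 0 end | [] => 0 end.

Lemma Ls_nonneg g l : 0 <= Ls g l.
Proof. induction l as [|x l IH]; simpl; [lra|]. destruct l; [lra|]. pose proof (Rabs_pos (g x - g v0)). lra. Qed.
Lemma S1_nonneg g l : 0 <= S1 g l.
Proof. induction l as [|x l IH]; simpl; [lra|]. destruct l; [lra|].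
  pose proof (mm_nonneg x v0). pose proof (pow2_ge_0 (g x - g v0)). nra. Qed.

Lemma Ls_tri g ys : forall x z, In z ys -> g x <= g z + Ls g (x :: ys).
Proof. induction ys as [|y ys IH]; intros x z Hz; [destruct Hz|].
  change (Ls g (x :: y :: ys)) with (Rabs (g x - g y) + Ls g (y :: ys)).
  pose proof (Rle_abs (g x - g y)). pose proof (Ls_nonneg g (y :: ys)).
  destruct Hz as [<-|Hz]; [lra|]. specialize (IH y z Hz). lra. Qed.

Lemma Ls_CS g ys : forall x, chain (x :: ys) -> (Ls g (x :: ys)) ^ 2 <= INR (length ys) * S1 g (x :: ys).
Proof. induction ys as [|y ys IH]; intros x Hc.
  - simpl. lra.
  - change (Ls g (x :: y :: ys)) with (Rabs (g x - g y) + Ls g (y :: ys)).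
    change (S1 g (x :: y :: ys)) with (mm x y * (g x - g y) ^ 2 + S1 g (y :: ys)).
    destruct Hc as [Hxy Hc]. specialize (IH y Hc).
    pose proof (mm_ge1 x y Hxy). pose proof (Ls_nonneg g (y :: ys)). pose proof (S1_nonneg g (y :: ys)).
    set (L := Ls g (y :: ys)) in *. set (S := S1 g (y :: ys)) in *.
    set (a := Rabs (g x - g y)). assert (Ha : 0 <= a) by apply Rabs_pos.
    assert (Ha2 : a ^ 2 = (g x - g y) ^ 2) by (unfold a; apply pow2_abs).
    rewrite <- Ha2. simpl length. rewrite S_INR.
    set (n := INR (length ys)) in *. assert (Hn : 0 <= n) by apply pos_INR.
    assert (a ^ 2 <= mm x y * a ^ 2) by (pose proof (pow2_ge_0 a); nra).
    destruct (Rle_lt_dec n 0) as [Hn0|Hn0].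
    + assert (n = 0) by lra. assert (L = 0) by (rewrite H3 in IH; nra). subst L. rewrite H3, H4. nra.
    + assert (Hsq : 0 <= (n * a - L) ^ 2) by apply pow2_ge_0.
      assert (2 * a * L <= n * a ^ 2 + L ^ 2 / n).
      { apply Rmult_le_reg_l with n; auto. field_simplify; [|lra]. nra. }
      assert (L ^ 2 / n <= S).
      { apply Rmult_le_reg_l with n; auto. field_simplify; lra. }
      nra.
Qed.

Definition locE (g : V -> R) z := lsum (fun u => mm z u * (g z - g u) ^ 2) (nbrs z).
Lemma locE_nonneg g z : 0 <= locE g z.
Proof. apply lsum_nonneg. intros. pose proof (mm_nonneg z x). pose proof (pow2_ge_0 (g z - g x)). nra. Qed.

Lemma S1_locE g l : chain l -> S1 g l <= lsum (locE g) l.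
Proof. induction l as [|x l IH]; intro Hc; [change (S1 g []) with 0; rewrite lsum_nil; lra|].
  destruct l as [|y l].
  - change (S1 g [x]) with 0. rewrite lsum_cons, lsum_nil. pose proof (locE_nonneg g x). lra.
  - change (S1 g (x :: y :: l)) with (mm x y * (g x - g y) ^ 2 + S1 g (y :: l)).
    destruct Hc as [Hxy Hc]. rewrite lsum_cons. specialize (IH Hc).
    assert (mm x y * (g x - g y) ^ 2 <= locE g x).
    { apply (lsum_term_le (fun u => mm x u * (g x - g u) ^ 2)); auto.
      intros. pose proof (mm_nonneg x y0). pose proof (pow2_ge_0 (g x - g y0)). nra. }
    lra. Qed.

Lemma sq_lower (g : V -> R) ys y : 0 <= y -> (forall z, In z ys -> y <= g z) ->
  INR (length ys) * y ^ 2 <= lsum (fun z => g z ^ 2) ys.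
Proof. intros Hy H. induction ys as [|z ys IH]; simpl length; [rewrite lsum_nil; simpl; lra|].
  rewrite S_INR, lsum_cons. assert (y <= g z) by (apply H; left; auto).
  assert (INR (length ys) * y ^ 2 <= lsum (fun z => g z ^ 2) ys) by (apply IH; intros; apply H; right; auto).
  nra. Qed.

Definition sh k y := In y (ball k) /\ forall j, (j < k)%nat -> ~ In y (ball j).

Lemma sh_uniq i j y : sh i y -> sh j y -> i = j.
Proof. intros [Hi0 Ni] [Hj0 Nj]. destruct (Nat.lt_trichotomy i j) as [H|[H|H]]; auto.
  - exfalso; exact (Nj i H Hi0). - exfalso; exact (Ni j H Hj0). Qed.

Lemma chain_snoc xs z y : chain (xs ++ [z]) -> In y (nbrs z) -> chain (xs ++ [z; y]).
Proof. induction xs as [|a xs IH]; intros Hc Hy.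
  - simpl. auto.
  - destruct xs as [|b xs].
    + simpl in *. tauto.
    + simpl in Hc |- *. destruct Hc as [H1 H2]. split; auto. apply IH; auto. Qed.

Lemma chain_firstn n l : chain l -> chain (firstn n l).
Proof. revert l; induction n; intros l Hc; [simpl; auto|]. destruct l as [|a l]; simpl; auto.
  destruct l as [|b l]; [destruct n; simpl; auto|].
  destruct Hc as [H1 H2]. specialize (IHn (b :: l) H2). destruct n; simpl in *; auto. Qed.

Lemma sh_step k y : sh (S k) y -> exists z, sh k z /\ In y (nbrs z).
Proof. intros [Hy Ny]. simpl in Hy. apply nodup_In, in_app_or in Hy. destruct Hy as [Hy|Hy].
  - exfalso; apply (Ny k); auto.
  - apply in_flat_map in Hy. destruct Hy as [z [Hz Hyz]]. exists z; split; auto. split; auto.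
    intros j Hj Hzj. apply (Ny (S j)); [lia|]. apply (ball_nb z); auto. Qed.

Lemma geo k : forall y, sh k y -> exists xs, length xs = k /\ chain (xs ++ [y]) /\
   nth 0 (xs ++ [y]) v = v /\ forall i, (i < S k)%nat -> sh i (nth i (xs ++ [y]) v).
Proof. induction k; intros y Hy.
  - exists []. simpl. destruct Hy as [Hy _]. simpl in Hy. destruct Hy as [<-|[]].
    split; [reflexivity|]. split; [exact I|]. split; [reflexivity|]. intros i Hi. assert (i = 0%nat) by lia. subst. split; [left; auto| intros; lia].
  - destruct (sh_step k y Hy) as [z [Hz Hzy]]. destruct (IHk z Hz) as [xs [Hl [Hc [H0 Hs]]]].
    exists (xs ++ [z]). rewrite <- app_assoc. simpl. split; [rewrite length_app; simpl; lia|].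
    split; [apply chain_snoc; auto|]. split.
    + destruct xs; simpl in *; auto.
    + intros i Hi. destruct (Nat.eq_dec i (S k)) as [->|Hne].
      * rewrite app_nth2 by lia. rewrite Hl. replace (S k - k)%nat with 1%nat by lia. simpl. auto.
      * assert (i < S k)%nat by lia. specialize (Hs i H).
        destruct (Nat.lt_ge_cases i k).
        -- rewrite app_nth1 in Hs |- * by (simpl; lia). auto.
        -- assert (i = k) by lia. subst i. rewrite app_nth2 in Hs |- * by lia. rewrite Hl in *.
           rewrite Nat.sub_diag in *. simpl in *. auto. Qed.

Lemma rt_ball x y : clos_refl_trans_1n V (adj mult) x y -> forall k, In x (ball k) -> exists n, In y (ball n).
Proof. induction 1; intros k Hk; eauto. apply (IHclos_refl_trans_1n (S k)). apply (ball_nb x); auto.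
  apply Hnb; auto. Qed.

Lemma shell_of n y : In y (ball n) -> exists k, (k <= n)%nat /\ sh k y.
Proof. induction n; intro Hy.
  - exists 0%nat; split; auto. split; auto. intros; lia.
  - destruct (classic (In y (ball n))) as [H|H].
    + destruct (IHn H) as [k [Hk Hs]]. exists k; split; auto.
    + exists (S n); split; auto. split; auto. intros j Hj Hyj. apply H. apply (ball_mono y j); auto; lia. Qed.

Lemma simple_path (Hc : connected_graph V mult) (Hi : infinite_type V) r :
  exists ys, length ys = r /\ chain (v :: ys) /\ NoDup (v :: ys).
Proof.
  assert (exists y, ~ In y (ball r)) as [y Hy].
  { apply NNPP. intro E. apply Hi. exists (ball r). intro x. apply NNPP. intro Hx. apply E; eauto. }
  destruct (rt_ball v y (clos_rt_rt1n _ _ _ _ (Hc v y)) 0 (v_ball 0)) as [n Hn].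
  destruct (shell_of n y Hn) as [k [_ Hk]].
  assert (Hrk : (r < k)%nat).
  { destruct (Nat.lt_ge_cases r k); auto. exfalso. apply Hy. apply (ball_mono y k); auto. destruct Hk; auto. }
  destruct (geo k y Hk) as [xs [Hl [Hch [H0 Hs]]]].
  set (l := xs ++ [y]) in *.
  assert (Hlen : length l = S k) by (unfold l; rewrite length_app; simpl; lia).
  assert (Hnd' : NoDup l).
  { apply (NoDup_nth l v). intros i j Hi' Hj' E. apply (sh_uniq i j (nth i l v)); [apply Hs; lia|]. rewrite E; apply Hs; lia. }
  set (p := firstn (S r) l).
  assert (Hp1 : length p = S r) by (unfold p; rewrite length_firstn; lia).
  assert (Hp2 : chain p) by (apply chain_firstn; auto).
  assert (Hp3 : NoDup p).
  { apply (NoDup_app_remove_r _ (skipn (S r) l)). unfold p. rewrite firstn_skipn. auto. }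
  assert (Hp4 : nth 0 p v = v) by (unfold p; rewrite nth_firstn; simpl; auto).
  destruct p as [|a ys]; [simpl in Hp1; lia|]. simpl in Hp4. subst a.
  exists ys. simpl in Hp1. repeat split; auto; lia.
Qed.

Lemma simple_path2 (Hc : connected_graph V mult) (Hi : infinite_type V) r : (1 <= r)%nat ->
  exists ys, length ys = r /\ chain (v :: ys) /\ NoDup (v :: ys) /\ exists z, In z ys /\ ~ In z (ball (r - 1)).
Proof.
  intro Hr1.
  assert (exists y, ~ In y (ball r)) as [y Hy].
  { apply NNPP. intro E. apply Hi. exists (ball r). intro x. apply NNPP. intro Hx. apply E; eauto. }
  destruct (rt_ball v y (clos_rt_rt1n _ _ _ _ (Hc v y)) 0 (v_ball 0)) as [n Hn].
  destruct (shell_of n y Hn) as [k [_ Hk]].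
  assert (Hrk : (r < k)%nat).
  { destruct (Nat.lt_ge_cases r k); auto. exfalso. apply Hy. apply (ball_mono y k); auto. destruct Hk; auto. }
  destruct (geo k y Hk) as [xs [Hl [Hch [H0 Hs]]]].
  set (l := xs ++ [y]) in *.
  assert (Hlen : length l = S k) by (unfold l; rewrite length_app; simpl; lia).
  assert (Hnd' : NoDup l).
  { apply (NoDup_nth l v). intros i j Hi' Hj' E. apply (sh_uniq i j (nth i l v)); [apply Hs; lia|]. rewrite E; apply Hs; lia. }
  set (p := firstn (S r) l).
  assert (Hp1 : length p = S r) by (unfold p; rewrite length_firstn; lia).
  assert (Hp2 : chain p) by (apply chain_firstn; auto).
  assert (Hp3 : NoDup p).
  { apply (NoDup_app_remove_r _ (skipn (S r) l)). unfold p. rewrite firstn_skipn. auto. }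
  assert (Hp4 : nth 0 p v = v) by (unfold p; rewrite nth_firstn; simpl; auto).
  assert (Hp5 : sh r (nth r p v)).
  { unfold p. rewrite nth_firstn. replace (r <? S r)%nat with true by (symmetry; apply Nat.ltb_lt; lia). apply Hs; lia. }
  destruct p as [|a ys]; [simpl in Hp1; lia|]. simpl in Hp4. subst a.
  exists ys. simpl in Hp1. repeat split; auto; try lia.
  exists (nth (r - 1) ys v). split.
  - apply nth_In. lia.
  - destruct Hp5 as [_ Hp5]. replace (nth r (v :: ys) v) with (nth (r - 1) ys v) in Hp5.
    + apply Hp5. lia.
    + destruct r; [lia|]. simpl. rewrite Nat.sub_0_r. reflexivity.
Qed.

Lemma dg_ge1 x : 1 <= dg x.
Proof. unfold dg. apply (le_INR 1). apply Hdeg. Qed.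

Lemma bern (b : R) n : 0 <= b <= 1 -> 1 - INR n * (1 - b) <= b ^ n.
Proof. intro Hb. induction n; [simpl; lra|]. rewrite S_INR, <- tech_pow_Rmult.
  assert (0 <= b ^ n) by (apply pow_le; lra). pose proof (pos_INR n).
  assert (b * (1 - INR n * (1 - b)) <= b * b ^ n) by (apply Rmult_le_compat_l; lra).
  assert (INR n * b * (1 - b) <= INR n * (1 - b)).
  { rewrite Rmult_assoc, (Rmult_comm b), <- Rmult_assoc. rewrite <- (Rmult_1_r (INR n * (1 - b))) at 2.
    apply Rmult_le_compat_l; [apply Rmult_le_pos|]; lra. }
  nra. Qed.

Lemma W_bound (Hc : connected_graph V mult) (Hi : infinite_type V) t : (1 <= t)%nat ->
  sum_f_R0 (fun k => h k v) (t - 1) <= 48 * INR (Nat.sqrt t) * dg v.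
Proof.
  intro Ht. set (N := (t - 1)%nat). set (T := INR t).
  assert (HT : 1 <= T) by (unfold T; apply (le_INR 1); auto).
  set (b := 1 - / (2 * T)).
  assert (Hb1 : 1/2 <= b < 1).
  { unfold b. assert (0 < / (2 * T)) by (apply Rinv_0_lt_compat; lra).
    assert (/ (2 * T) <= / 2) by (apply Rinv_le_contravar; lra). lra. }
  assert (Hb0 : 0 <= b) by lra.
  set (g := Gs b N).
  set (a := g v). set (W := sum_f_R0 (fun k => h k v) N).
  assert (HaW : W / 2 <= a).
  { unfold a, g, Gs, W. unfold Rdiv. rewrite Rmult_comm, scal_sum. apply sum_Rle. intros s Hs.
    pose proof (h_nonneg s v). assert (1/2 <= b ^ s).
    { pose proof (bern b s (conj Hb0 (Rlt_le _ _ (proj2 Hb1)))).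
      assert (INR s * (1 - b) <= 1/2).
      { unfold b. replace (1 - (1 - / (2 * T))) with (/ (2 * T)) by ring.
        assert (INR s <= T) by (unfold T; apply le_INR; unfold N in Hs; lia).
        apply Rmult_le_reg_l with (2 * T); [lra|]. field_simplify; lra. }
      lra. }
    nra. }
  assert (HW1 : 1 <= W).
  { unfold W. assert (h 0 v = 1) by (simpl; destruct (eqd v v); congruence).
    assert (forall n, 1 <= sum_f_R0 (fun k => h k v) n); [|auto].
    intro n; induction n; cbn [sum_f_R0]; [lra|]. pose proof (h_nonneg (S n) v). lra. }
  assert (Ha0 : 0 < a) by lra.
  pose proof (green_bound b Hb0 N) as Hgb. pose proof (Es_decomp b N) as Hed.
  assert (HQ : 0 <= Qs b N).
  { apply lsum_nonneg. intros. pose proof (dg_pos x). pose proof (pow2_ge_0 (Gs b N x)). nra. }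
  assert (HE : 0 <= Es b N) by (apply lsum_nonneg; intros; apply locE_nonneg).
  assert (Hkey : (1 - b) * Qs b N + b / 2 * Es b N <= dg v * a).
  { rewrite Hed. replace ((1 - b) * Qs b N + b / 2 * (2 * Qs b N - 2 * Ms b N)) with (Qs b N - b * Ms b N) by field.
    exact Hgb. }
  assert (HE2 : Es b N <= 4 * dg v * a).
  { assert (0 <= (1 - b) * Qs b N) by (apply Rmult_le_pos; lra). nra. }
  assert (HQ2 : Qs b N <= 2 * T * dg v * a).
  { assert (0 <= b / 2 * Es b N) by (apply Rmult_le_pos; lra).
    assert (Hb' : 1 - b = / (2 * T)) by (unfold b; ring).
    rewrite Hb' in Hkey. apply Rmult_le_reg_l with (/ (2 * T)). apply Rinv_0_lt_compat; lra.
    replace (/ (2 * T) * (2 * T * dg v * a)) with (dg v * a) by (field; lra). lra. }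
  set (r := Nat.sqrt t). set (Rr := INR r).
  assert (Hr : (r * r <= t /\ t < S r * S r)%nat) by (apply Nat.sqrt_spec; lia).
  assert (Hr1 : (1 <= r)%nat).
  { destruct (Nat.eq_dec r 0) as [E|E]; [|lia]. rewrite E in Hr. lia. }
  assert (HRr : 1 <= Rr) by (unfold Rr; apply (le_INR 1); auto).
  assert (HT4 : T <= 4 * Rr * Rr).
  { unfold T, Rr. replace 4 with (INR 4) by (simpl; lra). rewrite <- !mult_INR. apply le_INR. nia. }
  destruct (simple_path Hc Hi r) as [ys [Hl [Hch Hnd']]].
  set (L := Ls g (v :: ys)).
  assert (HL0 : 0 <= L) by apply Ls_nonneg.
  assert (HL : L ^ 2 <= Rr * Es b N).
  { apply Rle_trans with (Rr * S1 g (v :: ys)).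
    - unfold L, Rr. rewrite <- Hl. apply Ls_CS; auto.
    - apply Rmult_le_compat_l; [lra|]. apply Rle_trans with (lsum (locE g) (v :: ys)).
      + apply S1_locE; auto.
      + change (Es b N) with (lsum (locE g) (U N)). apply lsum_sub_support; auto.
        * apply ball_nodup.
        * apply locE_nonneg.
        * intros z Hz _. destruct (lsum_nonzero _ _ Hz) as [u [Hu Hf]].
          assert (g z <> 0 \/ g u <> 0) as [Hgz|Hgu] by (apply NNPP; intro E; apply Hf;
            assert (g z = 0) by (apply NNPP; intro; apply E; auto);
            assert (g u = 0) by (apply NNPP; intro; apply E; auto); rewrite H, H0; ring).
          -- unfold U. apply ball_S. apply (Gs_supp b N); auto.
          -- unfold U. apply (ball_nb u); [apply (Gs_supp b N); auto| apply nb_sym; auto]. }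
  set (y := Rmax 0 (a - L)).
  assert (Hy0 : 0 <= y) by apply Rmax_l.
  assert (Hay : a <= L + y) by (pose proof (Rmax_r 0 (a - L)); unfold y; lra).
  assert (Hyz : forall z, In z ys -> y <= g z).
  { intros z Hz. apply Rmax_lub; [apply (Gs_nonneg b Hb0 N)|]. pose proof (Ls_tri g ys v z Hz). unfold L, a; lra. }
  assert (HY : Rr * y ^ 2 <= Qs b N).
  { apply Rle_trans with (lsum (fun z => g z ^ 2) ys).
    - unfold Rr. rewrite <- Hl. apply sq_lower; auto.
    - apply Rle_trans with (lsum (fun z => dg z * g z ^ 2) ys).
      + apply lsum_le. intros z _. pose proof (dg_ge1 z). pose proof (pow2_ge_0 (g z)). nra.
      + unfold Qs. apply lsum_sub_support; auto.
        * inversion Hnd'; auto.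
        * apply ball_nodup.
        * intros z. pose proof (dg_pos z). pose proof (pow2_ge_0 (g z)). nra.
        * intros z Hz _. unfold U. apply ball_S. apply (Gs_supp b N). intro E. apply Hz. unfold g. rewrite E. ring. }
  assert (Ha2 : a ^ 2 <= 24 * Rr * dg v * a).
  { assert (a ^ 2 <= 2 * L ^ 2 + 2 * y ^ 2).
    { assert (a * a <= (L + y) * (L + y)) by (apply Rmult_le_compat; lra).
      pose proof (pow2_ge_0 (L - y)). nra. }
    assert (L ^ 2 <= 4 * Rr * dg v * a) by nra.
    assert (Rr * y ^ 2 <= 8 * Rr * Rr * dg v * a).
    { apply Rle_trans with (2 * T * dg v * a); [lra|]. pose proof (dg_pos v). nra. }
    assert (y ^ 2 <= 8 * Rr * dg v * a).
    { apply Rmult_le_reg_l with Rr; [lra|]. nra. }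
    lra. }
  assert (a <= 24 * Rr * dg v).
  { apply Rmult_le_reg_r with a; auto. replace (a * a) with (a ^ 2) by ring. lra. }
  lra.
Qed.

Definition F (k : nat) (x : V) : R := if eqd x v then 0 else A k x.
Definition Qop (f : V -> R) (x : V) : R :=
  if eqd x v then 0 else lsum (fun y => mm x y / dg x * f y) (nbrs x).
Fixpoint Qn (n : nat) (f : V -> R) : V -> R :=
  match n with O => f | S n' => Qop (Qn n' f) end.

Lemma F_v k : F k v = 0.
Proof. unfold F. destruct (eqd v v); congruence. Qed.

Lemma F_S k : F (S k) = Qop (F k).
Proof. apply functional_extensionality. intro x. unfold F, Qop. destruct (eqd x v); auto.
  simpl A. apply lsum_ext. intros u _. destruct (eqd u v); ring. Qed.

Lemma Qop_minus f g : Qop (fun x => f x - g x) = fun x => Qop f x - Qop g x.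
Proof. apply functional_extensionality. intro x. unfold Qop. destruct (eqd x v); [ring|].
  rewrite <- lsum_minus. apply lsum_ext. intros; ring. Qed.

Lemma Qn_minus n f g : Qn n (fun x => f x - g x) = fun x => Qn n f x - Qn n g x.
Proof. induction n; simpl; auto. rewrite IHn. apply Qop_minus. Qed.

Lemma Qn_F n k : Qn n (F k) = F (n + k).
Proof. induction n; simpl; auto. rewrite IHn, F_S. reflexivity. Qed.

Definition psi (x : V) : R := F 0 x - F 1 x.

Lemma F_diff k : (fun x => F k x - F (S k) x) = Qn k psi.
Proof. induction k; simpl; auto. rewrite <- IHk, Qop_minus, <- !F_S. reflexivity. Qed.

Lemma A_supp n x : A n x <> 1 -> In x (ball n).
Proof. revert x; induction n; intros x H; simpl in H; [lra|].
  destruct (classic (exists u, In u (nbrs x) /\ (u = v \/ A n u <> 1))) as [[u [Hu [e|Hn]]]|E].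
  - subst u. apply (ball_nb v); [apply v_ball| apply nb_sym; auto].
  - apply (ball_nb u); [apply IHn; auto| apply nb_sym; auto].
  - exfalso. apply H. rewrite <- (trans_sum x). apply lsum_ext. intros u Hu.
    destruct (eqd u v) as [e|ne]; [exfalso; apply E; eauto|].
    assert (A n u = 1) by (apply NNPP; intro; apply E; eauto). rewrite H0; ring. Qed.

Lemma Qn_supp n g s : (forall x, g x <> 0 -> In x (ball s)) -> forall x, Qn n g x <> 0 -> In x (ball (n + s)).
Proof. intro Hg. induction n; intros x H; simpl in *; auto.
  unfold Qop in H. destruct (eqd x v); [lra|]. destruct (lsum_nonzero _ _ H) as [u [Hu Hf]].
  assert (Qn n g u <> 0) by (intro E; apply Hf; rewrite E; ring).
  apply (ball_nb u); [apply IHn; auto| apply nb_sym; auto]. Qed.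

Lemma Qn_v n g : g v = 0 -> Qn n g v = 0.
Proof. intro H; destruct n; simpl; auto. unfold Qop. destruct (eqd v v); congruence. Qed.

Lemma psi_supp x : psi x <> 0 -> In x (ball 1).
Proof. unfold psi, F. destruct (eqd x v); [lra|]. intro H. apply A_supp. change (A 0 x) with 1 in H. intro E; apply H; rewrite E; ring. Qed.

Lemma F0_FN_supp N x : F 0 x - F N x <> 0 -> In x (ball N).
Proof. unfold F. destruct (eqd x v); [subst; intros; apply v_ball|]. intro H. apply A_supp. change (A 0 x) with 1 in H. intro E; apply H; rewrite E; ring. Qed.

Definition ip M (g k : V -> R) := lsum (fun x => dg x * g x * k x) (ball M).

Lemma dgQ x f c : (x = v -> c = 0) -> dg x * Qop f x * c = lsum (fun y => mm x y * f y * c) (nbrs x).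
Proof. intro H. unfold Qop. destruct (eqd x v) as [e|ne].
  - rewrite (H e). rewrite lsum_zero; [ring| intros; ring].
  - rewrite (Rmult_comm (dg x)), Rmult_assoc, Rmult_comm, <- lsum_scal. apply lsum_ext. intros. field.
    apply Rgt_not_eq, dg_pos. Qed.

Lemma sa1 M g k : g v = 0 -> k v = 0 -> (forall x, g x <> 0 -> In x (ball M)) ->
  ip (S M) (Qop g) k = ip (S M) g (Qop k).
Proof.
  intros Hg Hk Hs. unfold ip.
  rewrite (lsum_ext _ (fun x => lsum (fun y => mm x y * g y * k x) (ball (S M)))).
  2:{ intros x _. rewrite dgQ by (intro; subst; auto). apply lsum_eq_support; [apply Hnd| apply ball_nodup| |].
      - intros y Hf _. apply ball_S, Hs. intro E; apply Hf; rewrite E; ring.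
      - intros y Hf _. apply NNPP. intro Hn. apply Hf. rewrite mm_zero; auto; ring. }
  rewrite lsum_swap. apply lsum_ext. intros y _.
  assert (E1 : dg y * g y * Qop k y = lsum (fun x => mm y x * k x * g y) (nbrs y)).
  { replace (dg y * g y * Qop k y) with (dg y * Qop k y * g y) by ring. apply dgQ. intro; subst; auto. }
  rewrite E1. rewrite (lsum_ext (fun x => mm y x * k x * g y) (fun x => mm x y * g y * k x))
    by (intros; rewrite mm_sym; ring).
  apply lsum_eq_support; [apply ball_nodup| apply Hnd| |].
  - intros x Hf _. apply NNPP. intro Hn. apply Hf. rewrite mm_sym, mm_zero; auto; ring.
  - intros x Hf Hx. assert (g y <> 0) by (intro E; apply Hf; rewrite E; ring).
    apply (ball_nb y); [apply Hs; auto| auto].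
Qed.

Lemma Qop_v f : Qop f v = 0.
Proof. unfold Qop. destruct (eqd v v); congruence. Qed.

Lemma Qn_Qop n k : Qn n (Qop k) = Qop (Qn n k).
Proof. induction n; simpl; auto. rewrite IHn; auto. Qed.

Lemma saN n : forall R M g k, g v = 0 -> k v = 0 -> (forall x, g x <> 0 -> In x (ball M)) ->
  (n + M < R)%nat -> ip R (Qn n g) k = ip R g (Qn n k).
Proof.
  induction n; intros R M g k Hg Hk Hs HR; simpl; auto.
  destruct R as [|R']; [lia|].
  rewrite sa1; [| apply Qn_v; auto | auto | ].
  - rewrite (IHn (S R') M g (Qop k)); auto; [|apply Qop_v| lia]. rewrite Qn_Qop. reflexivity.
  - intros x Hx. apply (ball_mono x (n + M)); [lia|]. apply (Qn_supp n g M Hs x Hx).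
Qed.

Lemma dg_psi x : x <> v -> dg x * psi x = mm x v.
Proof. intro Hx. unfold psi, F. destruct (eqd x v); [contradiction|]. change (A 0 x) with 1.
  assert (E : 1 - A 1 x = lsum (fun u => if eqd u v then mm x u / dg x else 0) (nbrs x)).
  { rewrite <- (trans_sum x). simpl A. rewrite <- lsum_minus. apply lsum_ext. intros u _.
    destruct (eqd u v); ring. }
  rewrite E. destruct (classic (In v (nbrs x))) as [Hv|Hv].
  - rewrite (lsum_point _ _ v (Hnd x) Hv).
    + destruct (eqd v v); [|congruence]. field. apply Rgt_not_eq, dg_pos.
    + intros z Hz. destruct (eqd z v); auto. lra.
  - rewrite lsum_zero.
    + rewrite mm_zero; auto; ring.
    + intros u Hu. destruct (eqd u v); auto. subst; contradiction.
Qed.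

Lemma ip_psi R k : (1 <= R)%nat -> ip R psi (F k) = dg v * A (S k) v.
Proof.
  intro HR. unfold ip.
  rewrite (lsum_ext _ (fun x => mm v x * F k x)).
  2:{ intros x _. destruct (eqd x v) as [e|ne].
      - subst. rewrite F_v. ring.
      - rewrite dg_psi by auto. rewrite mm_sym. ring. }
  simpl A. rewrite <- lsum_scal.
  rewrite (lsum_ext (fun u => dg v * (if eqd u v then 0 else mm v u / dg v * A k u)) (fun u => mm v u * F k u)).
  2:{ intros u _. unfold F. destruct (eqd u v); [ring|]. field. apply Rgt_not_eq, dg_pos. }
  apply lsum_eq_support; [apply ball_nodup| apply Hnd| |].
  - intros x Hf _. apply NNPP. intro Hn. apply Hf. rewrite mm_zero; auto; ring.
  - intros x Hf Hx. apply (ball_mono x 1); auto. apply (ball_nb v); [left; auto| auto].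
Qed.

Lemma ip_plus R f g k : ip R (fun x => f x + g x) k = ip R f k + ip R g k.
Proof. unfold ip. rewrite <- lsum_plus. apply lsum_ext; intros; ring. Qed.

Lemma psi_v : psi v = 0.
Proof. unfold psi. rewrite !F_v. ring. Qed.

Lemma ip_step R k : (S k < R)%nat -> ip R (fun x => F k x - F (S k) x) (F 0) = dg v * A (S k) v.
Proof. intro H. rewrite F_diff. rewrite (saN k R 1 psi (F 0)); [ | apply psi_v | apply F_v | apply psi_supp | lia].
  rewrite Qn_F, Nat.add_0_r. apply ip_psi. lia. Qed.

Lemma tele R a j : (a + j < R)%nat ->
  ip R (fun x => F a x - F (a + j) x) (F 0) <= INR j * (dg v * A (S a) v).
Proof. induction j; intro H.
  - simpl. unfold ip. rewrite lsum_zero; [lra| intros; rewrite Nat.add_0_r; ring].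
  - replace (fun x => F a x - F (a + S j) x) with
      (fun x => (F a x - F (a + j) x) + (F (a + j) x - F (S (a + j)) x)).
    2:{ apply functional_extensionality; intro x. replace (a + S j)%nat with (S (a + j)) by lia. ring. }
    rewrite ip_plus, ip_step by lia. rewrite S_INR.
    pose proof (IHj ltac:(lia)). pose proof (A_mono (S (a + j)) (S a) v ltac:(lia)).
    pose proof (dg_pos v). nra.
Qed.

Lemma spectral N : (1 <= N)%nat ->
  ip (2 * N + 2) (fun x => F 0 x - F N x) (F N) <= INR N * (dg v * A (S N) v).
Proof.
  intro HN. set (R := (2 * N + 2)%nat).
  assert (E1 : F N = Qn N (F 0)) by (rewrite Qn_F, Nat.add_0_r; reflexivity).
  rewrite E1 at 1. rewrite <- (saN N R N); [ | | apply F_v | apply F0_FN_supp | unfold R; lia].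
  2:{ rewrite !F_v; ring. }
  rewrite Qn_minus, Qn_F, Qn_F, Nat.add_0_r.
  apply (tele R N N). unfold R; lia.
Qed.


Lemma energy_decomp g M R : (forall x, g x <> 0 -> In x (ball M)) -> (S M <= R)%nat ->
  lsum (locE g) (ball R) = 2 * lsum (fun x => dg x * g x ^ 2) (ball R)
     - 2 * lsum (fun x => lsum (fun u => mm x u * g x * g u) (nbrs x)) (ball R).
Proof.
  intros Hs HR.
  assert (Hsw : lsum (fun x => lsum (fun u => mm x u * g u ^ 2) (nbrs x)) (ball R)
              = lsum (fun x => dg x * g x ^ 2) (ball R)).
  { rewrite (lsum_ext _ (fun x => lsum (fun u => mm x u * g u ^ 2) (ball R))).
    2:{ intros x _. apply lsum_eq_support; [apply Hnd| apply ball_nodup| |].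
        - intros u Hf _. apply (ball_mono u M); [lia|]. apply Hs. intro E; apply Hf; rewrite E; ring.
        - intros u Hf _. apply NNPP. intro Hn. apply Hf. rewrite mm_zero; auto; ring. }
    rewrite lsum_swap. apply lsum_ext. intros u _.
    rewrite dg_lsum, Rmult_comm, <- lsum_scal.
    rewrite (lsum_ext (fun x => g u ^ 2 * mm u x) (fun x => mm x u * g u ^ 2)) by (intros; rewrite mm_sym; ring).
    apply lsum_eq_support; [apply ball_nodup| apply Hnd | |].
    - intros x Hf _. apply NNPP. intro Hn. apply Hf. rewrite mm_sym, mm_zero; auto; ring.
    - intros x Hf Hx. assert (g u <> 0) by (intro E; apply Hf; rewrite E; ring).
      apply (ball_mono x (S M)); auto. apply (ball_nb u); [apply Hs; auto|auto]. }
  rewrite <- Hsw.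
  assert (E1 : lsum (locE g) (ball R) = lsum (fun x => dg x * g x ^ 2) (ball R)
     - 2 * lsum (fun x => lsum (fun u => mm x u * g x * g u) (nbrs x)) (ball R)
     + lsum (fun x => lsum (fun u => mm x u * g u ^ 2) (nbrs x)) (ball R)).
  { rewrite <- lsum_scal, <- lsum_minus, <- lsum_plus. apply lsum_ext. intros x _. unfold locE.
    rewrite dg_lsum, Rmult_comm, <- !lsum_scal, <- lsum_minus, <- lsum_plus. apply lsum_ext. intros; ring. }
  rewrite E1, Hsw. ring.
Qed.

Definition Ps N x := 1 - F N x.

Lemma Ps_supp N x : Ps N x <> 0 -> In x (ball N).
Proof. unfold Ps, F. destruct (eqd x v); [subst; intros; apply v_ball|]. intro H. apply A_supp. lra. Qed.

Lemma Ps_bounds N x : 0 <= Ps N x <= 1.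
Proof. unfold Ps, F. destruct (eqd x v); [lra|]. pose proof (A_bounds N x). lra. Qed.

Lemma energy_bound N R : (S N <= R)%nat -> lsum (locE (Ps N)) (ball R) <= 2 * (dg v * A (S N) v).
Proof.
  intro HR. rewrite (energy_decomp (Ps N) N R (Ps_supp N) HR).
  assert (lsum (fun x => dg x * Ps N x ^ 2) (ball R) - lsum (fun x => lsum (fun u => mm x u * Ps N x * Ps N u) (nbrs x)) (ball R)
     <= dg v * A (S N) v); [|lra].
  rewrite <- lsum_minus.
  rewrite (lsum_ext _ (fun x => Ps N x * (dg x * Ps N x - lsum (fun u => mm x u * Ps N u) (nbrs x)))).
  2:{ intros x _. rewrite (lsum_ext (fun u => mm x u * Ps N x * Ps N u) (fun u => Ps N x * (mm x u * Ps N u))) by (intros; ring).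
      rewrite lsum_scal. ring. }
  assert (Hsum : forall x, lsum (fun u => mm x u * Ps N u) (nbrs x) = dg x - lsum (fun u => mm x u * F N u) (nbrs x)).
  { intro x. rewrite dg_lsum, <- lsum_minus. apply lsum_ext. intros; unfold Ps; ring. }
  assert (HF : forall x, lsum (fun u => mm x u * F N u) (nbrs x) = dg x * A (S N) x).
  { intro x. simpl A. rewrite <- lsum_scal. apply lsum_ext. intros u _. unfold F.
    destruct (eqd u v); [ring|]. field. apply Rgt_not_eq, dg_pos. }
  apply Rle_trans with (lsum (fun x => if eqd x v then dg v * A (S N) v else 0) (ball R)).
  - apply lsum_le. intros x _. rewrite Hsum, HF. destruct (eqd x v) as [e|ne].
    + subst x. unfold Ps. rewrite F_v. right; ring.
    + pose proof (Ps_bounds N x). pose proof (A_decr N x). pose proof (dg_pos x).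
      unfold Ps at 2. unfold F. destruct (eqd x v); [contradiction|].
      assert (dg x * (1 - A N x) - (dg x - dg x * A (S N) x) = dg x * (A (S N) x - A N x)) by ring.
      rewrite H2. assert (dg x * (A (S N) x - A N x) <= 0) by nra. nra.
  - right. rewrite (lsum_point _ _ v); [ | apply ball_nodup | apply v_ball | ].
    + destruct (eqd v v); congruence.
    + intros z Hz. destruct (eqd z v); auto. lra.
Qed.

Lemma chain_app_r a b : chain (a ++ b) -> chain b.
Proof. induction a as [|x a IH]; simpl; auto. intro H. apply IH.
  destruct a as [|y a]; simpl in *; [destruct b; tauto| tauto]. Qed.

Lemma chain_app_l a b : chain (a ++ b) -> chain a.
Proof. intro H. assert (E : firstn (length a + 0) (a ++ b) = a) by (rewrite firstn_app_2; simpl; apply app_nil_r).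
  rewrite <- E. apply chain_firstn; auto. Qed.

Lemma crossing (g : V -> R) l : forall x pre, 3/4 <= g x -> (forall w, In w pre -> 1/4 < g w < 3/4) ->
  (exists z, In z l /\ g z <= 1/4) ->
  exists l1 x' mids z l2, x :: pre ++ l = l1 ++ (x' :: mids ++ [z]) ++ l2 /\ 3/4 <= g x' /\ g z <= 1/4 /\
     forall w, In w mids -> 1/4 < g w < 3/4.
Proof.
  induction l as [|y l IH]; intros x pre Hx Hpre [z0 [Hz0 Hgz0]]; [destruct Hz0|].
  destruct (Rle_dec (g y) (1/4)) as [Hy|Hy].
  - exists [], x, pre, y, l. simpl. rewrite <- app_assoc. simpl. auto.
  - assert (Hex : exists z, In z l /\ g z <= 1/4).
    { destruct Hz0 as [<-|Hz0]; [lra| eauto]. }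
    destruct (Rle_dec (3/4) (g y)) as [Hy'|Hy'].
    + destruct (IH y [] Hy' (fun w Hw => match Hw with end) Hex) as [l1 [x' [mids [z [l2 [E [H1 [H2 H3]]]]]]]].
      exists (x :: pre ++ l1), x', mids, z, l2. split; auto. simpl in E. rewrite E. simpl. repeat rewrite <- app_assoc. reflexivity.
    + destruct (IH x (pre ++ [y]) Hx) as [l1 [x' [mids [z [l2 [E [H1 [H2 H3]]]]]]]]; auto.
      * intros w Hw. apply in_app_or in Hw. destruct Hw as [Hw|[<-|[]]]; auto. lra.
      * exists l1, x', mids, z, l2. split; auto. rewrite <- E. simpl. rewrite <- app_assoc. reflexivity.
Qed.

Lemma lsum_lower (f : V -> R) l c : (forall z, In z l -> c <= f z) -> INR (length l) * c <= lsum f l.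
Proof. intro H. induction l as [|z l IH]; simpl length; [rewrite lsum_nil; simpl; lra|].
  rewrite S_INR, lsum_cons. assert (c <= f z) by (apply H; left; auto).
  assert (INR (length l) * c <= lsum f l) by (apply IH; intros; apply H; right; auto). lra. Qed.

Lemma q_bound (Hc : connected_graph V mult) (Hi : infinite_type V) N : (1 <= N)%nat ->
  1 <= 16 * sqrt (INR N) * (dg v * A (S N) v).
Proof.
  intro HN. set (q := dg v * A (S N) v). set (R := (2 * N + 2)%nat).
  destruct (simple_path2 Hc Hi (S N) ltac:(lia)) as [ys [Hl [Hch [Hnd' [z0 [Hz0 Hz0b]]]]]].
  replace (S N - 1)%nat with N in Hz0b by lia.
  set (g := Ps N).
  assert (Hgv : g v = 1) by (unfold g, Ps; rewrite F_v; ring).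
  assert (Hgz0 : g z0 = 0) by (apply NNPP; intro E; apply Hz0b; apply Ps_supp; auto).
  assert (Hg34 : 3/4 <= g v) by lra.
  assert (Hex : exists z, In z ys /\ g z <= 1/4) by (exists z0; split; auto; lra).
  destruct (crossing g ys v [] Hg34 (fun w Hw => match Hw with end) Hex)
    as [l1 [x' [mids [z [l2 [E [H1 [H2 H3]]]]]]]].
  simpl in E. set (seg := x' :: mids ++ [z]) in *.
  assert (E' : v :: ys = l1 ++ seg ++ l2) by (rewrite E; unfold seg; simpl; rewrite <- app_assoc; reflexivity).
  assert (Hcs : chain seg) by (rewrite E' in Hch; apply chain_app_r in Hch; apply chain_app_l in Hch; auto).
  assert (Hns : NoDup seg) by (rewrite E' in Hnd'; apply NoDup_app_remove_l in Hnd'; apply NoDup_app_remove_r in Hnd'; auto).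
  assert (Hnm : NoDup mids).
  { unfold seg in Hns. inversion Hns. apply NoDup_app_remove_r in H5. auto. }
  set (m := INR (length mids)). assert (Hm0 : 0 <= m) by apply pos_INR.
  assert (Hen : 1 / 4 <= (m + 1) * (2 * q)).
  { pose proof (Ls_tri g (mids ++ [z]) x' z ltac:(apply in_or_app; right; left; auto)) as HT.
    pose proof (Ls_CS g (mids ++ [z]) x' Hcs) as HCS. fold seg in HT, HCS.
    rewrite length_app in HCS. simpl length in HCS. rewrite plus_INR in HCS. simpl INR in HCS. fold m in HCS.
    assert (HS : S1 g seg <= 2 * q).
    { apply Rle_trans with (lsum (locE g) seg); [apply S1_locE; auto|].
      apply Rle_trans with (lsum (locE g) (ball R)); [|apply energy_bound; unfold R; lia].
      apply lsum_sub_support; auto; [apply ball_nodup| apply locE_nonneg|].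
      intros w Hw _. destruct (lsum_nonzero _ _ Hw) as [u [Hu Hf]].
      assert (g w <> 0 \/ g u <> 0) as [Hgw|Hgu] by (apply NNPP; intro E0; apply Hf;
            assert (g w = 0) by (apply NNPP; intro; apply E0; auto);
            assert (g u = 0) by (apply NNPP; intro; apply E0; auto); rewrite H, H0; ring).
      - apply (ball_mono w N); [unfold R; lia| apply Ps_supp; auto].
      - apply (ball_mono w (S N)); [unfold R; lia|]. apply (ball_nb u); [apply Ps_supp; auto| apply nb_sym; auto]. }
    set (L := Ls g seg) in *. assert (1/2 <= L) by lra.
    assert (L ^ 2 <= (m + 1) * (2 * q)) by (apply Rle_trans with ((m + 1) * S1 g seg); auto; apply Rmult_le_compat_l; lra).
    nra. }
  assert (Hsp : 3 / 16 * m <= INR N * q).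
  { apply Rle_trans with (ip R (fun x => F 0 x - F N x) (F N)); [| apply spectral; auto].
    apply Rle_trans with (lsum (fun x => dg x * (F 0 x - F N x) * F N x) mids).
    - rewrite Rmult_comm. apply lsum_lower. intros w Hw. specialize (H3 w Hw).
      assert (w <> v) by (intro; subst; lra).
      assert (F 0 w = 1) by (unfold F; destruct (eqd w v); [contradiction| reflexivity]).
      assert (F N w = 1 - g w) by (unfold g, Ps; ring). rewrite H0, H4.
      pose proof (dg_ge1 w). assert (3/16 <= (1 - (1 - g w)) * (1 - g w)) by nra. nra.
    - unfold ip. apply lsum_sub_support; auto; [apply ball_nodup| |].
      + intro x. pose proof (dg_pos x). unfold F. destruct (eqd x v); [lra|]. pose proof (A_bounds 0 x).
        pose proof (A_bounds N x). pose proof (A_mono N 0 x ltac:(lia)). apply Rmult_le_pos; [apply Rmult_le_pos|]; lra.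
      + intros x Hx _. apply (ball_mono x N); [unfold R; lia|]. apply F0_FN_supp. intro E0. apply Hx. rewrite E0. ring. }
  set (sN := sqrt (INR N)).
  assert (HN1 : 1 <= INR N) by (apply (le_INR 1); auto).
  assert (Hs1 : 1 <= sN) by (unfold sN; rewrite <- sqrt_1; apply sqrt_le_1_alt; lra).
  assert (Hs2 : sN * sN = INR N) by (unfold sN; apply sqrt_sqrt; lra).
  assert (Hq0 : 0 <= q) by (unfold q; pose proof (dg_pos v); pose proof (A_bounds (S N) v); nra).
  destruct (Rle_dec (m + 1) (2 * sN)) as [Hc1|Hc1].
  - nra.
  - assert (sN <= m) by lra. rewrite <- Hs2 in Hsp. nra.
Qed.
End G.

Lemma deg_ge_mult {V} (mult : V -> V -> nat) nbrs x z : In z (nbrs x) -> (mult x z <= deg mult nbrs x)%nat.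
Proof. unfold deg. induction (nbrs x) as [|a l IH]; simpl; [tauto|]. intros [<-|H]; [lia|]. specialize (IH H). lia. Qed.

Lemma deg_pos_all {V} (mult : V -> V -> nat) nbrs : lf_multigraph V mult nbrs -> connected_graph V mult ->
  infinite_type V -> forall x, (0 < deg mult nbrs x)%nat.
Proof.
  intros [Hsym [Hloop [Hnd Hnb]]] Hc Hi x.
  assert (exists y, y <> x) as [y Hy].
  { apply NNPP. intro E. apply Hi. exists [x]. intro z. left. apply NNPP. intro Hz. apply E. exists z; auto. }
  pose proof (clos_rt_rt1n _ _ _ _ (Hc x y)) as H. inversion H; subst; [congruence|].
  unfold adj in H0. pose proof (deg_ge_mult mult nbrs x y0 (proj2 (Hnb x y0) H0)). lia.
Qed.

Theorem theorem1p1 :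
  exists c : R, 0 < c /\
    forall (V : Type) (mult : V -> V -> nat) (nbrs : V -> list V),
      lf_multigraph V mult nbrs ->
      connected_graph V mult ->
      infinite_type V ->
      forall (v : V) (t : nat), (1 <= t)%nat ->
        c / (INR (deg mult nbrs v) * sqrt (INR t)) <= return_tail mult nbrs v t.
Proof.
  exists (1/16). split; [lra|].
  intros V mult nbrs Hlf Hc Hi v t Ht.
  pose proof (deg_pos_all mult nbrs Hlf Hc Hi) as Hdeg.
  destruct Hlf as [Hsym [Hloop [Hnd Hnb]]].
  unfold return_tail. rewrite tail_A.
  set (N := Nat.max 1 (t - 2)).
  pose proof (q_bound mult nbrs Hsym Hnd Hnb Hdeg v Hc Hi N ltac:(unfold N; lia)) as Hq.
  pose proof (A_mono mult nbrs Hdeg v (S N) (t - 1) v ltac:(unfold N; lia)) as Hm.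
  assert (HNt : sqrt (INR N) <= sqrt (INR t)) by (apply sqrt_le_1_alt, le_INR; unfold N; lia).
  change (INR (deg mult nbrs v)) with (dg mult nbrs v).
  pose proof (dg_pos mult nbrs Hdeg v) as Hd.
  assert (Hst : 0 < sqrt (INR t)) by (apply sqrt_lt_R0, lt_0_INR; lia).
  assert (HA : 0 <= A mult nbrs v (S N) v) by (apply (A_bounds mult nbrs Hdeg)).
  assert (1 <= 16 * sqrt (INR t) * (dg mult nbrs v * A mult nbrs v (t - 1) v)).
  { apply Rle_trans with (1 := Hq). pose proof (sqrt_pos (INR N)).
    apply Rmult_le_compat; try nra. }
  unfold Rdiv. apply Rmult_le_reg_l with (dg mult nbrs v * sqrt (INR t)); [nra|].
  rewrite <- Rmult_assoc, (Rmult_comm _ (1/16)), Rmult_assoc, Rinv_r by nra. nra.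
Qed.
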